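(* Let $\Gamma$ be a gain operator on $\ell^\infty_+(\mathcal I)$ and assume: (i) there is a subset $A\subset\Psi(\Gamma)$ which is weakly$^*$ closed, forward-invariant ($\Gamma(A)\subset A$), cofinal and coercive; (ii) $\Sigma(\Gamma)$ is GATT; (iii) Assumption A holds and $\mathcal N^+_i(1)\setminus\{i\}\ne\emptyset$ for all $i\in\mathcal I$. Then there exists $s^0\in\mathrm{int}(\ell^\infty_+(\mathcal I))\cap\Psi(\Gamma)$ admitting a complete orbit $\{s^n:n\in\mathbb Z\}$ (i.e. $s^{n+1}=\Gamma(s^n)$ for all $n\in\mathbb Z$) such that the path obtained by linear interpolation between the points $s^n$ is a $C^0$-path of decay for $\Gamma$.
   Context: Let $\mathcal I$ be a nonempty countable index set; $\ell^\infty_+(\mathcal I)$ is the cone of nonnegative real families $s=(s_i)_{i\in\mathcal I}$ with $\|s\|:=\sup_i|s_i|<\infty$, ordered componentwise; its interior is $\mathrm{int}(\ell^\infty_+(\mathcal I))=\{s:\inf_i s_i>0\}$; $\mathbf 1$ is the all-ones vector. The weak$^*$-topology is that of $\ell^\infty(\mathcal I)=(\ell^1(\mathcal I))^*$. $\mathcal K_\infty$: continuous strictly increasing unbounded $\gamma:\mathbb R_+\to\mathbb R_+$ with $\gamma(0)=0$. For $\mathcal J\subset\mathcal I$, $s_{|\mathcal J}$ agrees with $s$ on $\mathcal J$ and is $0$ elsewhere. Gain operator: for each $i$ a finite (possibly empty) $\mathcal I_i\subset\mathcal I\setminus\{i\}$; directed graph $\mathcal G$ with vertices $\mathcal I$ and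 edges $ji$, $j\in\mathcal I_i$; a pointwise equicontinuous family $\gamma_{ij}\in\mathcal K_\infty$ ($ji\in E(\mathcal G)$); functions $\mu_i:\ell^\infty_+(\mathcal I)\to[0,\infty]$ with (M1) some $\xi\in\mathcal K_\infty$ has $\mu_i(0)=0$, $\mu_i(s)\ge\xi(\|s\|)$; (M2) $\mu_i$ monotone; (M3) for each finite $\mathcal J$, $\mu_i$ restricted to vectors vanishing off $\mathcal J$ is finite-valued and continuous; (M4) for each norm-bounded $A$ and $\varepsilon>0$ there is $\delta>0$ with $\sup_i|\mu_i(s_{|\mathcal I_i})-\mu_i(s^0_{|\mathcal I_i})|\le\varepsilon$ whenever $s^0\in A$, $\|s-s^0\|\le\delta$. $\Gamma_i(s):=\mu_i([\gamma_{ij}(s_j)]_{j\in\mathcal I_i})$ (argument zero outside $\mathcal I_i$). Assumption A: there is $\eta\in\mathcal K_\infty$ with $\gamma_{ij}\ge\eta$ for all $ji\in E(\mathcal G)$, and $\mathcal I_i\ne\emptyset$ for all $i$. $\mathcal N^+_i(1)$ is the set of vertices $j$ reachable from $i$ by a directed path of length at most $1$ (i.e. $\{i\}\cup\{j: i\in\mathcal I_j\}$). $\Psi(\Gamma):=\{s:\Gamma(s)\le s\}$; $\Sigma(\Gamma)$ is the system $s^{n+1}=\Gamma(s^n)$, GATT if $\|\Gamma^n(s)\|\to0$ for all $s$. $A$ is cofinal if every $s$ has $\hat s\in A$ with $s\le\hat s$; coercive if $s\ge\underline\varphi(\|s\|)\mathbf 1$ for all $s\in A$ and some $\underline\varphi\in\mathcal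 K_\infty$. A $C^0$-path of decay for $\Gamma$ is a path $\sigma:\mathbb R_+\to\ell^\infty_+(\mathcal I)$ with $\sigma(r)\in\Psi(\Gamma)$ for all $r$, $\varphi_{\min}(r)\mathbf 1\le\sigma(r)\le\varphi_{\max}(r)\mathbf 1$ for some $\varphi_{\min},\varphi_{\max}\in\mathcal K_\infty$, increasing and norm-continuous. *)

(* Defs.v *)
From HB Require Import structures.
From mathcomp Require Import all_boot all_order all_algebra.
From mathcomp Require Import all_classical all_reals all_analysis.
Set Implicit Arguments. Unset Strict Implicit. Unset Printing Implicit Defensive.
Import Order.TTheory GRing.Theory Num.Theory.
Import numFieldNormedType.Exports.
Local Open Scope classical_set_scope.
Local Open Scope ring_scope.

Section Defs.
Variables (R : realType) (I : countType).

Definition bounded_fam (s : I -> R) := exists M : R, forall i, `|s i| <= M.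
Definition linf_plus (s : I -> R) := (forall i, 0 <= s i) /\ bounded_fam s.

Definition linf_norm (s : I -> R) : R := sup [set `|s i| | i in [set: I]].

Definition int_linf_plus (s : I -> R) :=
  linf_plus s /\ exists c : R, 0 < c /\ forall i, c <= s i.

Definition ones : I -> R := fun _ => 1.

Definition fle (s t : I -> R) := forall i, s i <= t i.

Definition restr (s : I -> R) (J : set I) : I -> R :=
  fun i => if i \in J then s i else 0.

Definition l1 (y : I -> R) := summable [set: I] (fun i => (y i)%:E).
Definition lsum (f : I -> R) : R :=
  fine (\esum_(i in [set: I]) (Num.max (f i) 0)%:E)
  - fine (\esum_(i in [set: I]) (Num.max (- f i) 0)%:E).
Definition pairing (s y : I -> R) : R := lsum (fun i => s i * y i).

(* weak^*-closed subsets of ell^infty(I) = (ell^1(I))^* : the complement is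
   open for the topology generated by the functionals s |-> <s, y>, y in ell^1 *)
Definition weakstar_closed (A : set (I -> R)) :=
  A `<=` bounded_fam /\
  forall s, bounded_fam s -> ~ A s ->
    exists (ys : seq (I -> R)) (e : R), 0 < e /\ (forall y, y \in ys -> l1 y) /\
      forall t, bounded_fam t ->
        (forall y, y \in ys -> `|pairing t y - pairing s y| < e) -> ~ A t.

End Defs.

Definition Kinf {R : realType} (g : R -> R) :=
  g 0 = 0 /\
  (forall x, 0 <= x -> forall e : R, 0 < e -> exists d : R, 0 < d /\
      forall y, 0 <= y -> `|y - x| < d -> `|g y - g x| < e) /\
  (forall x y, 0 <= x -> x < y -> g x < g y) /\
  (forall M : R, exists x, 0 <= x /\ M < g x).

Definition Gain {R : realType} {I : countType} (Ii : I -> set I)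
  (gam : I -> I -> R -> R) (mu : I -> (I -> R) -> \bar R) (s : I -> R) : I -> R :=
  fun i => fine (mu i (fun j => if j \in Ii i then gam i j (s j) else 0)).

Definition gain_operator_data {R : realType} {I : countType} (Ii : I -> set I)
  (gam : I -> I -> R -> R) (mu : I -> (I -> R) -> \bar R) :=
  (forall i, finite_set (Ii i) /\ ~ Ii i i) /\
  (forall i j, Ii i j -> Kinf (gam i j)) /\
  (forall r, 0 <= r -> forall e : R, 0 < e -> exists d : R, 0 < d /\
      forall i j r', Ii i j -> 0 <= r' -> `|r' - r| <= d ->
        `|gam i j r' - gam i j r| <= e) /\
  (forall i s, linf_plus s -> (0 <= mu i s)%E) /\
  (exists xi : R -> R, Kinf xi /\ forall i,
      mu i (fun _ => 0) = 0%E /\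
      forall s, linf_plus s -> ((xi (linf_norm s))%:E <= mu i s)%E) /\
  (forall i s t, linf_plus s -> linf_plus t -> fle s t -> (mu i s <= mu i t)%E) /\
  (forall (J : set I), finite_set J -> forall i,
      (forall s, linf_plus s -> (forall k, ~ J k -> s k = 0) -> mu i s \is a fin_num) /\
      (forall s, linf_plus s -> (forall k, ~ J k -> s k = 0) ->
         forall e : R, 0 < e -> exists d : R, 0 < d /\
         forall t, linf_plus t -> (forall k, ~ J k -> t k = 0) ->
           linf_norm (fun k => t k - s k) <= d ->
           `|fine (mu i t) - fine (mu i s)| <= e)) /\
  (* (M4): for every norm-bounded set (w.l.o.g. a ball of radius M) *)
  (forall (M e : R), 0 < e -> exists d : R, 0 < d /\
      forall s0 s, linf_plus s0 -> linf_norm s0 <= M -> linf_plus s ->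
        linf_norm (fun k => s k - s0 k) <= d ->
        forall i, `|fine (mu i (restr s (Ii i))) - fine (mu i (restr s0 (Ii i)))| <= e).

Definition assumptionA {R : realType} {I : countType} (Ii : I -> set I)
  (gam : I -> I -> R -> R) :=
  (exists eta : R -> R, Kinf eta /\
     forall i j, Ii i j -> forall r, 0 <= r -> eta r <= gam i j r) /\
  (forall i, Ii i !=set0).

(* N^+_i(1): vertices reachable from i by a directed path of length <= 1 *)
Definition Nplus1 {I : countType} (Ii : I -> set I) (i : I) : set I :=
  [set j | j = i \/ Ii j i].

Definition Psi {R : realType} {I : countType} (Gam : (I -> R) -> I -> R) : set (I -> R) :=
  [set s | linf_plus s /\ fle (Gam s) s].

Definition GATT {R : realType} {I : countType} (Gam : (I -> R) -> I -> R) :=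
  forall s, linf_plus s -> (fun n : nat => linf_norm (iter n Gam s)) @ \oo --> (0 : R).

Definition cofinal {R : realType} {I : countType} (A : set (I -> R)) :=
  forall s, linf_plus s -> exists2 s', A s' & fle s s'.

Definition coercive {R : realType} {I : countType} (A : set (I -> R)) :=
  exists phi : R -> R, Kinf phi /\
    forall s, A s -> fle (fun i => phi (linf_norm s) * @ones R I i) s.

Definition C0_path_of_decay {R : realType} {I : countType}
  (Gam : (I -> R) -> I -> R) (sigma : R -> I -> R) :=
  (forall r, 0 <= r -> Psi Gam (sigma r)) /\
  (exists phimin phimax : R -> R, Kinf phimin /\ Kinf phimax /\
     forall r, 0 <= r ->
       fle (fun i => phimin r * @ones R I i) (sigma r) /\
       fle (sigma r) (fun i => phimax r * @ones R I i)) /\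
  (forall r1 r2, 0 <= r1 -> r1 <= r2 -> fle (sigma r1) (sigma r2)) /\
  (forall r, 0 <= r -> forall e : R, 0 < e -> exists d : R, 0 < d /\
     forall r', 0 <= r' -> `|r' - r| < d -> linf_norm (fun i => sigma r' i - sigma r i) < e).

(* sigma is the linear interpolation of the complete orbit (s^n)_{n in Z}:
   s^n sits at parameter 2^(-n), sigma is affine on each [2^(-n-1), 2^(-n)],
   and sigma(0) = 0 (the limit of s^n as n -> +oo). *)
Definition interpolates {R : realType} {I : countType}
  (sn : int -> I -> R) (sigma : R -> I -> R) :=
  sigma 0 = (fun _ => 0) /\
  forall (n : int) (th : R), 0 <= th <= 1 ->
    sigma ((1 - th) * (2 : R) ^ (- (n + 1)) + th * (2 : R) ^ (- n)) =
    (fun i => (1 - th) * sn (n + 1) i + th * sn n i).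

(* Main.v *)
Require Import Defs.
From HB Require Import structures.
From mathcomp Require Import all_boot all_order all_algebra.
From mathcomp Require Import all_classical all_reals all_analysis.
From mathcomp Require Import finmap.
From mathcomp Require Import zify ring lra.
Set Implicit Arguments. Unset Strict Implicit. Unset Printing Implicit Defensive.
Import Order.TTheory GRing.Theory Num.Theory.
Import numFieldNormedType.Exports.
Local Open Scope classical_set_scope.
Local Open Scope ring_scope.
Section Basic.
Variable R : realType.

Lemma Kinf_ge0 (g : R -> R) x : Kinf g -> 0 <= x -> 0 <= g x.
Proof.
move=> [g0 [_ [gi _]]]; rewrite le_eqVlt => /predU1P[<-|x0]; first by rewrite g0.
by rewrite -g0 ltW // gi.
Qed.

Lemma Kinf_le (g : R -> R) x y : Kinf g -> 0 <= x -> x <= y -> g x <= g y.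
Proof.
move=> [g0 [_ [gi _]]] x0; rewrite le_eqVlt => /predU1P[->//|xy].
by rewrite ltW // gi.
Qed.

Lemma Kinf_lt (g : R -> R) x y : Kinf g -> 0 <= x -> x < y -> g x < g y.
Proof. by move=> [g0 [_ [gi _]]] x0 xy; rewrite gi. Qed.

Lemma Kinf_gt0 (g : R -> R) x : Kinf g -> 0 < x -> 0 < g x.
Proof. by move=> gK x0; have := Kinf_lt gK (lexx 0) x0; rewrite gK.1. Qed.

Lemma Kinf_unb (g : R -> R) M : Kinf g -> exists x, 0 <= x /\ M < g x.
Proof. by move=> [_ [_ [_ gu]]]; apply: gu. Qed.

Lemma Kinf_inv_bound (g : R -> R) M : Kinf g ->
  exists B, 0 <= B /\ forall x, 0 <= x -> g x <= M -> x <= B.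
Proof.
move=> gK; have [B [B0 MB]] := Kinf_unb M gK; exists B; split => // x x0 gxM.
rewrite leNgt; apply/negP => Bx.
have := Kinf_lt gK B0 Bx; rewrite ltNge => /negP; apply.
by rewrite (le_trans gxM) // ltW.
Qed.

Lemma Kinf_comp (g h : R -> R) : Kinf g -> Kinf h -> forall M, exists x, 0 <= x /\ M < g (h x).
Proof.
move=> gK hK M; have [u [u0 Mu]] := Kinf_unb M gK.
have [x [x0 ux]] := Kinf_unb u hK; exists x; split => //.
by rewrite (lt_le_trans Mu) // Kinf_le // ltW.
Qed.

Variable I : countType.

Lemma norm_ge (s : I -> R) j : bounded_fam s -> `|s j| <= linf_norm s.
Proof.
move=> [M hM]; rewrite /linf_norm; apply: ub_le_sup; last by exists j.
by exists M => y [i _ <-].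
Qed.

Lemma norm_le (s : I -> R) d : 0 <= d -> (forall i, `|s i| <= d) -> linf_norm s <= d.
Proof.
move=> d0 hd; rewrite /linf_norm.
have [[j _]|] := pselect (exists j : I, True).
  by apply: ge_sup; [exists `|s j|, j | move=> y [i _ <-]].
move=> nI; suff -> : [set `|s i| | i in [set: I]] = set0 by rewrite sup0.
by apply/seteqP; split => // y [i _ _]; apply: nI; exists i.
Qed.

Lemma norm_ge0 (s : I -> R) : 0 <= linf_norm s.
Proof.
rewrite /linf_norm.
have [[j _]|] := pselect (exists j : I, True).
  have [hb|nb] := pselect (has_ubound [set `|s i| | i in [set: I]]).
    have H : `|s j| <= sup [set `|s i| | i in [set: I]] by apply: ub_le_sup; [exact: hb| exists j].
    exact: le_trans H.
  by rewrite sup_out // => -[_ hs]; apply: nb.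
move=> nI; suff -> : [set `|s i| | i in [set: I]] = set0 by rewrite sup0.
by apply/seteqP; split => // y [i _ _]; apply: nI; exists i.
Qed.

Lemma finite_bounded (J : set I) (f : I -> R) : finite_set J ->
  (forall k, ~ J k -> f k = 0) -> bounded_fam f.
Proof.
move=> /finite_fsetP [X ->] hf.
exists (\sum_(j <- X) `|f j|) => i.
have [iX|iX] := boolP (i \in X).
  rewrite (big_fsetD1 i) //= lerDl sumr_ge0 //.
have -> : f i = 0 by apply: hf => /=; apply/negP.
by rewrite normr0 sumr_ge0.
Qed.

End Basic.

Section KinfCvg.
Variable R : realType.
Lemma Kinf_cvg (g : R -> R) {T} (F : set_system T) {FF : Filter F} (x : T -> R) (y : R) :
  Kinf g -> (forall t, 0 <= x t) -> 0 <= y -> x @ F --> y -> (fun t => g (x t)) @ F --> g y.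
Proof.
move=> [_ [gc _]] x0 y0 cx; apply/cvgrPdist_lt => e e0.
have [d [d0 hd]] := gc y y0 e e0.
move/cvgrPdist_lt: cx => /(_ d d0); apply: filterS => t ht.
by rewrite distrC; apply: hd => //; rewrite distrC.
Qed.
End KinfCvg.
Section HFun.
Variable R : realType.
Definition hfun (r : R) := r / (1 + r).

Lemma hfun_diff x y : 0 <= x -> 0 <= y -> hfun y - hfun x = (y - x) / ((1 + x) * (1 + y)).
Proof.
move=> x0 y0; rewrite /hfun; field.
by apply/andP; split; apply: lt0r_neq0; lra.
Qed.

Lemma hfun_ge0 x : 0 <= x -> 0 <= hfun x.
Proof. by move=> x0; rewrite /hfun divr_ge0 //; lra. Qed.

Lemma hfun_le1 x : 0 <= x -> hfun x <= 1.
Proof. by move=> x0; rewrite /hfun ler_pdivrMr ?mul1r; lra. Qed.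

Lemma hfun_lip x y : 0 <= x -> 0 <= y -> `|hfun y - hfun x| <= `|y - x|.
Proof.
move=> x0 y0; rewrite hfun_diff // normrM normfV.
rewrite (ger0_norm (_ : 0 <= (1 + x) * (1 + y))); last by apply: mulr_ge0; lra.
rewrite ler_pdivrMr; last by apply: mulr_gt0; lra.
have := normr_ge0 (y - x); have := mulr_ge0 x0 y0; nra.
Qed.

Lemma hfun_lt x y : 0 <= x -> x < y -> hfun x < hfun y.
Proof.
move=> x0 xy; rewrite -subr_gt0 hfun_diff //; last by lra.
by apply: divr_gt0; [lra|apply: mulr_gt0; lra].
Qed.

Lemma hfun_half y : 1 <= y -> 1 / 2 <= hfun y.
Proof. by move=> y1; rewrite /hfun ler_pdivlMr; lra. Qed.

Lemma hfun0 : hfun 0 = 0.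
Proof. by rewrite /hfun mul0r. Qed.
End HFun.
Section Pow2.
Variable R : realType.
Definition p2 (n : int) : R := (2:R) ^ (- n).

Lemma p2_gt0 n : 0 < p2 n.
Proof. by apply: exprz_gt0. Qed.

Lemma p2S n : p2 (n + 1) = p2 n / 2.
Proof. by rewrite /p2 opprD expfzDr ?pnatr_eq0 // exprN1. Qed.

Lemma p2_lt_succ n : p2 (n + 1) < p2 n.
Proof. by rewrite p2S; have := p2_gt0 n; lra. Qed.

Lemma p2_anti m (k : nat) : p2 (m + k%:Z) <= p2 m.
Proof.
elim: k => [|k IH]; first by rewrite addr0.
rewrite -addn1 PoszD addrA; exact: le_trans (ltW (p2_lt_succ _)) IH.
Qed.

Lemma p2_le m n : m <= n -> p2 n <= p2 m.
Proof. move=> mn; have -> : n = m + (absz (n - m))%:Z by lia.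
exact: p2_anti. Qed.

Lemma p2_lt m n : m < n -> p2 n < p2 m.
Proof.
move=> mn; apply: le_lt_trans (p2_lt_succ m); apply: p2_le; lia.
Qed.

Lemma p2_nat (N : nat) : p2 N%:Z * 2 ^+ N = 1.
Proof.
elim: N => [|N IH]; first by rewrite /p2 oppr0 expr0z mulr1.
rewrite -addn1 PoszD p2S exprD expr1; rewrite -[RHS]IH; field; rewrite ?pnatr_eq0 //.
Qed.

Lemma p2_negnat (N : nat) : p2 (- N%:Z) = 2 ^+ N.
Proof. by rewrite /p2 opprK. Qed.

Lemma pow2_ge (N : nat) : N%:R <= (2 : R) ^+ N.
Proof. by rewrite -natrX ler_nat; apply: ltnW; exact: ltn_expl. Qed.

Lemma p2_nat_small r : 0 < r -> exists N : nat, p2 N%:Z < r.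
Proof.
move=> r0; exists (Num.bound (r^-1)).
have ri : 0 < r^-1 by rewrite invr_gt0.
have hb := archi_boundP (ltW ri).
have h2 := pow2_ge (Num.bound r^-1).
have := p2_nat (Num.bound r^-1).
set x := p2 _; set y := (2:R) ^+ _ => xy.
have ry : r^-1 < y by exact: lt_le_trans hb h2.
have y0 : 0 < y by exact: lt_trans ri ry.
have -> : x = y^-1 by rewrite -(mulfK (lt0r_neq0 y0) x) xy mul1r.
by rewrite -(invrK r) ltf_pV2 ?posrE.
Qed.

Lemma p2_negnat_big r : exists M : nat, r <= p2 (- M%:Z).
Proof.
exists (Num.bound `|r|); rewrite p2_negnat; apply: le_trans (ler_norm r) _.
apply: le_trans (pow2_ge _); exact: ltW (archi_boundP (normr_ge0 r)).
Qed.

Lemma seg_exists r : 0 < r -> exists n, p2 (n + 1) < r <= p2 n.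
Proof.
move=> r0; have [N hN] := p2_nat_small r0; have [M hM] := p2_negnat_big r.
suff H : forall (k : nat) n, r <= p2 n -> p2 (n + k%:Z) < r ->
    exists m, p2 (m + 1) < r <= p2 m.
  by apply: (H (N + M)%N (- M%:Z) hM); have -> : - M%:Z + (N + M)%N%:Z = N%:Z by lia.
elim=> [|k IH] n rn hk; first by move: hk; rewrite addr0 ltNge rn.
have [h|h] := ltP (p2 (n + 1)) r; first by exists n; rewrite h rn.
apply: (IH (n + 1)) => //; have -> : n + 1 + k%:Z = n + k.+1%:Z by lia.
exact: hk.
Qed.

Lemma seg_unique r m n : p2 (m + 1) < r <= p2 m -> p2 (n + 1) < r <= p2 n -> m = n.
Proof.
move=> /andP[hm1 hm2] /andP[hn1 hn2].
have [mn|nm|//] := ltgtP m n.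
  have h : p2 n <= p2 (m + 1) by apply: p2_le; lia.
  by have := lt_le_trans hm1 hn2; rewrite ltNge h.
have h : p2 m <= p2 (n + 1) by apply: p2_le; lia.
by have := lt_le_trans hn1 hm2; rewrite ltNge h.
Qed.

End Pow2.
Section Ultra.
Variable R : realType.

Lemma ultra_lim (U : set_system nat) (UU : UltraFilter U) (x : nat -> R) (a b : R) :
  U [set k | a <= x k <= b] -> exists l, a <= l <= b /\ x @ U --> l.
Proof.
move=> Uab.
have PF : ProperFilter (x @ U) by apply: fmap_proper_filter; exact: ultra_proper.
have := @segment_compact R a b (x @ U) PF.
have FA : (x @ U) `[a, b]%classic.
  change (U (x @^-1` `[a, b]%classic)).
  by apply: filterS Uab => k /= hk; rewrite /= in_itv /=.
move=> /(_ FA) [p [/= pab clp]]; exists p; split; first by move: pab; rewrite in_itv.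
move=> B Bp; have [//|UnB] := in_ultra_setVsetC (x @^-1` B) UU.
have := clp (~` B) B UnB Bp; by move=> [q [nBq Bq]].
Qed.

End Ultra.
Section GainLemmas.
Variables (R : realType) (I : countType).
Variables (Ii : I -> set I) (gam : I -> I -> R -> R) (mu : I -> (I -> R) -> \bar R).
Variables (xi eta : R -> R).
Hypothesis hfin : forall i, finite_set (Ii i).
Hypothesis hgK : forall i j, Ii i j -> Kinf (gam i j).
Hypothesis xiK : Kinf xi.
Hypothesis etaK : Kinf eta.
Hypothesis hM1 : forall i, mu i (fun _ => 0) = 0%E /\
      forall s, linf_plus s -> ((xi (linf_norm s))%:E <= mu i s)%E.
Hypothesis hM2 : forall i s t, linf_plus s -> linf_plus t -> fle s t -> (mu i s <= mu i t)%E.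
Hypothesis hM3 : forall (J : set I), finite_set J -> forall i,
      (forall s, linf_plus s -> (forall k, ~ J k -> s k = 0) -> mu i s \is a fin_num) /\
      (forall s, linf_plus s -> (forall k, ~ J k -> s k = 0) ->
         forall e : R, 0 < e -> exists d : R, 0 < d /\
         forall t, linf_plus t -> (forall k, ~ J k -> t k = 0) ->
           linf_norm (fun k => t k - s k) <= d ->
           `|fine (mu i t) - fine (mu i s)| <= e).
Hypothesis heta : forall i j, Ii i j -> forall r, 0 <= r -> eta r <= gam i j r.
Hypothesis hne : forall i, Ii i !=set0.
Hypothesis hN : forall j, exists i, Ii i j.

Definition vec (s : I -> R) i := fun j => if j \in Ii i then gam i j (s j) else 0.
Local Notation Gam := (Gain Ii gam mu).

Definition nonneg (s : I -> R) := forall j, 0 <= s j.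

Lemma vec_supp s i k : ~ Ii i k -> vec s i k = 0.
Proof. by move=> nk; rewrite /vec ifF //; apply/negP => /set_mem. Qed.

Lemma vec_ge0 s i : nonneg s -> nonneg (vec s i).
Proof.
move=> s0 j; rewrite /vec; case: ifPn => // /set_mem ij.
exact: Kinf_ge0 (hgK ij) (s0 j).
Qed.

Lemma vec_plus s i : nonneg s -> linf_plus (vec s i).
Proof.
move=> s0; split; first exact: vec_ge0.
apply: (finite_bounded (hfin i)) => k; exact: vec_supp.
Qed.

Lemma mu_fin s i : nonneg s -> mu i (vec s i) \is a fin_num.
Proof. by move=> s0; apply: (hM3 (hfin i) i).1; [exact: vec_plus|exact: vec_supp]. Qed.

Lemma Gain_ge0 s : nonneg s -> nonneg (Gam s).
Proof.
move=> s0 i; rewrite /Gain -/(vec s i).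
have := (hM1 i).2 _ (vec_plus i s0); rewrite -(fineK (mu_fin i s0)) lee_fin.
apply: le_trans; apply: Kinf_ge0 xiK _; exact: norm_ge0.
Qed.

Lemma Gain_lb s i j : nonneg s -> Ii i j -> xi (eta (s j)) <= Gam s i.
Proof.
move=> s0 ij; rewrite /Gain -/(vec s i).
have := (hM1 i).2 _ (vec_plus i s0); rewrite -(fineK (mu_fin i s0)) lee_fin.
apply: le_trans; apply: Kinf_le xiK _ _; first exact: Kinf_ge0 etaK (s0 j).
apply: le_trans (heta ij (s0 j)) _.
have := norm_ge j (vec_plus i s0).2; rewrite {1}/vec ifT; last exact: mem_set.
by rewrite ger0_norm //; exact: Kinf_ge0 (hgK ij) (s0 j).
Qed.

Lemma Gain_lb_const s t : nonneg s -> 0 <= t -> (forall j, t <= s j) ->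
  forall i, xi (eta t) <= Gam s i.
Proof.
move=> s0 t0 ts i; have [j ij] := hne i; apply: le_trans (Gain_lb s0 ij).
apply: Kinf_le xiK _ _; first exact: Kinf_ge0 etaK t0.
exact: Kinf_le etaK t0 (ts j).
Qed.

Lemma Gain_mono s t : nonneg s -> fle s t -> fle (Gam s) (Gam t).
Proof.
move=> s0 st; have t0 : nonneg t by move=> j; exact: le_trans (s0 j) (st j).
move=> i; rewrite /Gain -/(vec s i) -/(vec t i).
apply: fine_le; [exact: mu_fin|exact: mu_fin|].
apply: hM2; [exact: vec_plus|exact: vec_plus|] => j.
rewrite /vec; case: ifPn => // /set_mem ij.
exact: Kinf_le (hgK ij) (s0 j) (st j).
Qed.

Lemma Gain0 : Gam (fun _ => 0) = (fun _ => 0).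
Proof.
apply/funext => i; rewrite /Gain.
have -> : (fun j => if j \in Ii i then gam i j 0 else 0) = (fun _ => 0).
  apply/funext => j; case: ifPn => // /set_mem ij; exact: (hgK ij).1.
by rewrite (hM1 i).1.
Qed.

Lemma Gain_back U : exists B, forall s, nonneg s -> (forall i, Gam s i <= U) ->
  forall j, s j <= B.
Proof.
have [x [x0 Ux]] := Kinf_comp xiK etaK U; exists x => s s0 sU j.
rewrite leNgt; apply/negP => xs.
have [i ij] := hN j.
have := Gain_lb s0 ij; rewrite leNgt => /negP; apply.
apply: le_lt_trans (sU i) _; apply: lt_trans Ux _.
apply: Kinf_lt xiK _ _; first exact: Kinf_ge0 etaK x0.
exact: Kinf_lt etaK x0 xs.
Qed.

Lemma Gain_cvg {T} (F : set_system T) {FF : Filter F} (x : T -> I -> R) (y : I -> R) i :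
  (forall t, nonneg (x t)) -> nonneg y ->
  (forall j, Ii i j -> (fun t => x t j) @ F --> y j) ->
  (fun t => Gam (x t) i) @ F --> Gam y i.
Proof.
move=> x0 y0 cx; apply/cvgrPdist_le => e e0.
have [d [d0 hd]] := (hM3 (hfin i) i).2 _ (vec_plus i y0) (fun k => @vec_supp y i k) e e0.
have [X hX] := finite_fsetP.1 (hfin i).
have : \forall t \near F, forall j, j \in X -> `|gam i j (x t j) - gam i j (y j)| < d.
  have := @filter_bigI T I X (fun j => [set t | `|gam i j (x t j) - gam i j (y j)| < d]) F FF.
  move=> H; apply: filterS (H _); first by move=> t /= Ht j jX; apply: Ht.
  move=> j jX; have ij : Ii i j by rewrite hX.
  have [_ [gc _]] := hgK ij.
  have [d' [d'0 hd']] := gc _ (y0 j) d d0.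
  move/cvgrPdist_lt: (cx j ij) => /(_ _ d'0).
  apply: filterS => t /= ht; apply: hd' => //; first exact: x0.
  by rewrite distrC.
apply: filterS => t ht.
rewrite distrC; apply: hd; [exact: vec_plus|exact: vec_supp|].
apply: norm_le; first exact: ltW.
move=> j; rewrite /vec; case: ifPn => [/set_mem ij|_]; last by rewrite subrr normr0 ltW.
by apply: ltW; apply: ht; move: ij; rewrite hX.
Qed.


Variable A : set (I -> R).
Hypothesis hAPsi : A `<=` Psi Gam.
Hypothesis hAinv : forall s, A s -> A (Gam s).
Hypothesis hcof : cofinal A.
Variable phi : R -> R.
Hypothesis phiK : Kinf phi.
Hypothesis hcoer : forall s, A s -> fle (fun i => phi (linf_norm s) * @ones R I i) s.
Hypothesis hGATT : GATT Gam.
Variable i0 : I.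

Lemma A_nonneg s : A s -> nonneg s.
Proof. by move=> /hAPsi [[]]. Qed.

Lemma A_bdd s : A s -> bounded_fam s.
Proof. by move=> /hAPsi [[]]. Qed.

Lemma A_dec s : A s -> fle (Gam s) s.
Proof. by move=> /hAPsi []. Qed.

Lemma A_coer s i j : A s -> phi (s j) <= s i.
Proof.
move=> As; have := hcoer As i; rewrite /ones mulr1; apply: le_trans.
apply: Kinf_le phiK (A_nonneg As j) _.
by have := norm_ge j (A_bdd As); rewrite ger0_norm //; exact: A_nonneg.
Qed.

Lemma A_iter m s : A s -> A (iter m Gam s).
Proof. by move=> As; elim: m => //= m IH; exact: hAinv. Qed.

Lemma iter_nonneg m s : nonneg s -> nonneg (iter m Gam s).
Proof. by move=> s0; elim: m => //= m IH; exact: Gain_ge0. Qed.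

Lemma iter_dec m p s : A s -> fle (iter (m + p) Gam s) (iter m Gam s).
Proof.
move=> As; elim: p => [|p IH] j; first by rewrite addn0.
rewrite addnS /=; apply: le_trans (IH j); apply: A_dec; exact: A_iter.
Qed.

Lemma iter_lb m C : exists t, 0 <= t /\ forall y, nonneg y -> (forall j, t <= y j) ->
  forall j, C <= iter m Gam y j.
Proof.
elim: m C => [|m IH] C.
  by exists `|C|; split => // y _ ty j /=; apply: le_trans (ty j); exact: ler_norm.
have [C' [C'0 hC']] := Kinf_comp xiK etaK C.
have [t [t0 ht]] := IH C'; exists t; split => // y y0 ty j /=.
apply: le_trans (ltW hC') _; apply: Gain_lb_const => //; first exact: iter_nonneg.
by move=> k; exact: ht.
Qed.

Lemma big_start k : exists a, A a /\ forall m, (m <= k)%N -> 1 < iter m Gam a i0.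
Proof.
have [t [t0 ht]] := iter_lb k 2.
have [a Aa ta] : exists2 a, A a & fle (fun _ => t) a.
  by apply: hcof; split => //; exists `|t| => _.
exists a; split => // m mk.
have := iter_dec m (k - m) Aa i0; rewrite subnKC //; apply: lt_le_trans.
apply: lt_le_trans (ht _ (A_nonneg Aa) ta i0); exact: ltr1n.
Qed.

Lemma gatt_small a : A a -> exists m, iter m Gam a i0 <= 1.
Proof.
move=> Aa; have := hGATT (conj (A_nonneg Aa) (A_bdd Aa)).
move/cvgrPdist_lt => /(_ 1 ltr01) [N _ hN'].
exists N; have := hN' N (leqnn N); rewrite /= sub0r normrN ger0_norm; last exact: norm_ge0.
move=> h; apply: ltW; apply: le_lt_trans h; apply: le_trans (ler_norm _) _.
apply: norm_ge; apply: A_bdd; exact: A_iter.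
Qed.

Lemma start k : exists am : (I -> R) * nat, A am.1 /\ (k < am.2)%N /\
  iter am.2 Gam am.1 i0 <= 1 /\ 1 < iter am.2.-1 Gam am.1 i0.
Proof.
have [a [Aa ha]] := big_start k.
have ex : exists m, (fun m => iter m Gam a i0 <= 1) m by exact: gatt_small.
case: (ex_minnP ex) => m Pm mmin.
have km : (k < m)%N.
  rewrite ltnNge; apply/negP => mk; have := ha m mk; rewrite ltNge Pm //.
exists (a, m); split => //; split => //; split => //=.
rewrite ltNge; apply/negP => Pm1; have := mmin _ Pm1.
move=> h; lia.
Qed.
Section Orbit.
Variable f : nat -> (I -> R) * nat.
Hypothesis hf : forall k, A (f k).1 /\ (k < (f k).2)%N /\
  iter (f k).2 Gam (f k).1 i0 <= 1 /\ 1 < iter (f k).2.-1 Gam (f k).1 i0.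

Definition c k (n : int) := iter (absz ((f k).2%:Z + n)) Gam (f k).1.

Lemma c_A k n : A (c k n).
Proof. by apply: A_iter; case: (hf k). Qed.

Lemma c_nonneg k n : nonneg (c k n).
Proof. exact: A_nonneg (c_A k n). Qed.

Lemma c_step k n : (absz n <= k)%N -> c k (n + 1) = Gam (c k n).
Proof.
move=> nk; have [_ [km _]] := hf k; rewrite /c.
have -> : absz ((f k).2%:Z + (n + 1)) = (absz ((f k).2%:Z + n)).+1 by lia.
by [].
Qed.

Lemma c_dec k n : (absz n <= k)%N -> fle (c k (n + 1)) (c k n).
Proof. by move=> nk; rewrite c_step //; apply: A_dec; exact: c_A. Qed.

Lemma c_0_le k : c k 0 i0 <= 1.
Proof. by rewrite /c addr0 absz_nat; case: (hf k) => _ [_ []]. Qed.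

Lemma c_0_lb k j : xi (eta (phi 1)) <= c k 0 j.
Proof.
have [Aa [km [_ h1]]] := hf k.
rewrite /c addr0 absz_nat -(prednK (leq_ltn_trans (leq0n k) km)) /=.
have Ai := A_iter (f k).2.-1 Aa.
apply: Gain_lb_const; [exact: A_nonneg Ai|exact: Kinf_ge0 phiK ler01|].
move=> j'; apply: le_trans (A_coer j' i0 Ai).
exact: Kinf_le phiK ler01 (ltW h1).
Qed.

Lemma c_bound_pos (p : nat) : exists B, forall k j, c k p%:Z j <= B.
Proof.
have [B [B0 hB]] := Kinf_inv_bound 1 phiK.
exists B => k j; have Aa := (hf k).1.
have := iter_dec (f k).2 p Aa j; rewrite /c -PoszD absz_nat => h.
apply: le_trans h _; apply: hB; first exact: iter_nonneg (A_nonneg Aa) j.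
apply: le_trans (A_coer i0 j (A_iter _ Aa)) _.
by have := c_0_le k; rewrite /c addr0 absz_nat.
Qed.

Lemma c_bound_neg (p : nat) : exists B, forall k, (p <= k)%N -> forall j, c k (- p%:Z) j <= B.
Proof.
elim: p => [|p [B hB]].
  by have [B hB] := c_bound_pos 0; exists B => k _ j; rewrite oppr0; apply: hB.
have [B' hB'] := Gain_back B; exists B' => k pk j.
apply: hB'; first exact: c_nonneg.
move=> i; rewrite -c_step; last by lia.
have -> : - (p.+1)%:Z + 1 = - p%:Z by lia.
by apply: hB; lia.
Qed.

Lemma c_bound n : exists B, forall k, (absz n <= k)%N -> forall j, c k n j <= B.
Proof.
case: n => p; first by have [B hB] := c_bound_pos p; exists B => k _ j; apply: hB.
have [B hB] := c_bound_neg p.+1; exists B => k pk j.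
have -> : Negz p = - (p.+1)%:Z by rewrite NegzE.
by apply: hB.
Qed.


Context {G : set_system nat} {GU : UltraFilter G}.
Hypothesis hG : forall P : set nat, (\forall k \near \oo, P k) -> G P.

Lemma G_ge N : G [set k | (N <= k)%N].
Proof. by apply: hG; exists N. Qed.

Lemma le_limG (u v : nat -> R) a b : u @ G --> a -> v @ G --> b ->
  G [set k | u k <= v k] -> a <= b.
Proof. by move=> ua vb uv; apply: (ler_cvg_to ua vb). Qed.

Lemma orbit_exists : exists s : int -> I -> R,
  (forall n, nonneg (s n) /\ bounded_fam (s n)) /\
  (forall n, s (n + 1) = Gam (s n)) /\
  (forall n, fle (s (n + 1)) (s n)) /\
  (forall n i j, phi (s n j) <= s n i) /\
  (forall j, xi (eta (phi 1)) <= s 0 j).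
Proof.
have ex : forall nj : (int * I)%type, exists l : R, (fun k => c k nj.1 nj.2) @ G --> l.
  move=> [n j]; have [B hB] := c_bound n.
  have H : G [set k | 0 <= c k n j <= B].
    by apply: filterS (G_ge (absz n)) => k /= nk; rewrite c_nonneg hB.
  have [l [_ hl]] := @ultra_lim R G GU (fun k => c k n j) 0 B H.
  by exists l.
have [s0 hs0] := choice ex.
pose s n j := s0 (n, j).
have hs : forall n j, (fun k => c k n j) @ G --> s n j by move=> n j; exact: (hs0 (n, j)).
have s_ge0 : forall n, nonneg (s n).
  move=> n j; apply: (le_limG (cvg_cst 0) (hs n j)).
  by apply: filterS (G_ge 0) => k _; exact: c_nonneg.
exists s; split.
  move=> n; split => //; have [B hB] := c_bound n; exists B => j.
  rewrite ger0_norm; last exact: s_ge0.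
  apply: (le_limG (hs n j) (cvg_cst B)).
  by apply: filterS (G_ge (absz n)) => k /= nk; exact: hB.
split.
  move=> n; apply/funext => i.
  have h1 : (fun k => Gam (c k n) i) @ G --> Gam (s n) i.
    apply: Gain_cvg; [move=> t; exact: c_nonneg|exact: s_ge0|] => j _; exact: hs.
  have h2 : (fun k => c k (n + 1) i) @ G --> Gam (s n) i.
    apply: cvg_trans h1; apply: near_eq_cvg.
    by apply: filterS (G_ge (absz n)) => k /= nk; rewrite c_step.
  exact: (cvg_unique _ (hs (n + 1) i) h2).
split.
  move=> n i; apply: (le_limG (hs (n + 1) i) (hs n i)).
  by apply: filterS (G_ge (absz n)) => k /= nk; exact: c_dec.
split.
  move=> n i j; apply: (le_limG _ (hs n i)).
    apply: (Kinf_cvg phiK); [move=> k; exact: c_nonneg|exact: s_ge0|exact: hs].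
  by apply: filterS (G_ge 0) => k _; exact: A_coer (c_A k n).
move=> j; apply: (le_limG (cvg_cst _) (hs 0 j)).
by apply: filterS (G_ge 0) => k _; exact: c_0_lb.
Qed.

End Orbit.
Lemma norm_mono (x y : I -> R) : nonneg x -> fle x y -> bounded_fam y ->
  linf_norm x <= linf_norm y.
Proof.
move=> x0 xy yb; apply: norm_le; first exact: norm_ge0.
move=> i; rewrite ger0_norm //; apply: le_trans (xy i) _.
by apply: le_trans (norm_ge i yb); exact: ler_norm.
Qed.

Section Path.
Variable s : int -> I -> R.
Hypothesis hs1 : forall n, nonneg (s n) /\ bounded_fam (s n).
Hypothesis hs2 : forall n, s (n + 1) = Gam (s n).
Hypothesis hs3 : forall n, fle (s (n + 1)) (s n).
Hypothesis hs4 : forall n i j, phi (s n j) <= s n i.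
Hypothesis hs5 : forall j, xi (eta (phi 1)) <= s 0 j.

Lemma delta_gt0 : 0 < xi (eta (phi 1)).
Proof. by apply: Kinf_gt0 xiK _; apply: Kinf_gt0 etaK _; apply: Kinf_gt0 phiK _. Qed.

Lemma s_mono_aux m (k : nat) : fle (s (m + k%:Z)) (s m).
Proof.
elim: k => [|k IH] j; first by rewrite addr0.
by rewrite -addn1 PoszD addrA; apply: le_trans (hs3 _ j) (IH j).
Qed.

Lemma s_mono m n : m <= n -> fle (s n) (s m).
Proof.
move=> mn; have -> : n = m + (absz (n - m))%:Z by lia.
exact: s_mono_aux.
Qed.

Lemma s_lb_nat (p : nat) : exists t, 0 < t /\ forall j, t <= s p%:Z j.
Proof.
elim: p => [|p [t [t0 ht]]]; first by exists (xi (eta (phi 1))); split; [exact: delta_gt0|].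
exists (xi (eta t)); split; first by apply: Kinf_gt0 xiK _; exact: Kinf_gt0 etaK _.
move=> j; rewrite -addn1 PoszD hs2; apply: Gain_lb_const => //; first exact: (hs1 _).1.
exact: ltW.
Qed.

Lemma s_pos n j : 0 < s n j.
Proof.
case: n => p; first by have [t [t0 ht]] := s_lb_nat p; exact: lt_le_trans t0 (ht j).
apply: lt_le_trans delta_gt0 _; apply: le_trans (hs5 j) _.
by apply: s_mono; rewrite NegzE oppr_le0.
Qed.

Lemma s_iter p n : iter p Gam (s n) = s (n + p%:Z).
Proof. by elim: p => [|p IH]; [rewrite addr0|rewrite /= IH -hs2 -addn1 PoszD addrA]. Qed.

Lemma s_to0 e : 0 < e -> exists N : nat, forall n : int, N%:Z <= n -> linf_norm (s n) < e.
Proof.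
move=> e0; have := hGATT (hs1 0); move/cvgrPdist_lt => /(_ e e0) [N _ hN'].
exists N => n Nn; apply: (@le_lt_trans _ _ (linf_norm (s N%:Z))).
  by apply: norm_mono; [exact: (hs1 _).1|exact: s_mono|exact: (hs1 _).2].
have := hN' N (leqnn N); rewrite /= sub0r normrN ger0_norm; last exact: norm_ge0.
by rewrite s_iter add0r.
Qed.

Lemma s_unb C : exists p : nat, C < s (- p%:Z) i0.
Proof.
case: (pselect (exists p : nat, C < s (- p%:Z) i0)) => // nex; exfalso.
have H : forall p : nat, s (- p%:Z) i0 <= C.
  by move=> p; rewrite leNgt; apply/negP => h; apply: nex; exists p.
have [B [B0 hB]] := Kinf_inv_bound C phiK.
have sB : forall (p : nat) j, s (- p%:Z) j <= B.
  move=> p j; apply: hB; first exact: (hs1 _).1.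
  exact: le_trans (hs4 _ i0 j) (H p).
pose u j := fun p : nat => s (- p%:Z) j.
have und : forall j, nondecreasing_seq (u j).
  by move=> j m n mn; apply: s_mono; rewrite lerN2 lez_nat.
have uub : forall j, has_ubound (range (u j)) by move=> j; exists B => _ [p _ <-]; exact: sB.
pose l j := sup (range (u j)).
have hl : forall j, u j @ \oo --> l j by move=> j; exact: nondecreasing_cvgn.
have lge : forall j, u j 0%N <= l j.
  by move=> j; apply: ub_le_sup; [exact: uub|exists 0%N].
have l0 : nonneg l by move=> j; apply: le_trans (lge j); exact: (hs1 _).1.
have lb : bounded_fam l.
  exists B => j; rewrite ger0_norm //; apply: ge_sup; first by exists (u j 0%N), 0%N.
  by move=> _ [p _ <-]; exact: sB.
have fix_l : Gam l = l.
  apply/funext => i.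
  have h1 : (fun p => Gam (s (- p%:Z)) i) @ \oo --> Gam l i.
    by apply: Gain_cvg => //; [move=> t; exact: (hs1 _).1|move=> j _; exact: hl].
  have h2 : (fun p : nat => Gam (s (- p.+1%:Z)) i) @ \oo --> Gam l i.
    by move: h1; rewrite -cvg_shiftS.
  have h3 : (fun p : nat => Gam (s (- p.+1%:Z)) i) = u i.
    apply/funext => p; rewrite /u -hs2.
    by have -> : - (p.+1)%:Z + 1 = - p%:Z by lia.
  by rewrite h3 in h2; exact: (cvg_unique _ h2 (hl i)).
have := hGATT (conj l0 lb).
have -> : (fun n : nat => linf_norm (iter n Gam l)) = (fun _ => linf_norm l).
  have iterl : forall n, iter n Gam l = l by elim => //= n ->; exact: fix_l.
  by apply/funext => n; rewrite iterl.
move=> h; have {}h : linf_norm l = 0.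
  by apply: (cvg_unique _ (cvg_cst (linf_norm l)) h).
have : 0 < linf_norm l.
  apply: lt_le_trans (s_pos 0 i0) _; apply: le_trans (lge i0) _.
  by apply: le_trans (ler_norm _) (norm_ge i0 lb).
by move=> lt; lra.
Qed.


Section Sigma.
Variable segf : R -> int.
Hypothesis hseg : forall r, 0 < r -> p2 R (segf r + 1) < r <= p2 R (segf r).

Definition interp n (a : R) : I -> R :=
  fun i => s (n + 1) i + (a / p2 R (n + 1) - 1) * (s n i - s (n + 1) i).
Definition sigma (r : R) : I -> R := if r <= 0 then (fun _ => 0) else interp (segf r) r.

Lemma p2S2 n : p2 R n = 2 * p2 R (n + 1).
Proof. by rewrite p2S; field. Qed.

Lemma th_bounds n a : p2 R (n + 1) <= a <= p2 R n -> 0 <= a / p2 R (n + 1) - 1 <= 1.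
Proof.
move=> /andP[h1 h2]; have q0 := p2_gt0 R (n + 1).
rewrite subr_ge0 ler_pdivlMr // mul1r h1 /= lerBlDr ler_pdivrMr //.
by move: h2; rewrite p2S2; lra.
Qed.

Lemma interp_bounds n a i : p2 R (n + 1) <= a <= p2 R n ->
  s (n + 1) i <= interp n a i <= s n i.
Proof.
move=> h; have /andP[t0 t1] := th_bounds h; have d0 := hs3 n i.
rewrite /interp; set t := _ - 1; set d := s n i - _.
have dd : 0 <= d by rewrite subr_ge0.
apply/andP; split; first by rewrite lerDl mulr_ge0.
have : t * d <= d by rewrite -[leRHS]mul1r ler_wpM2r.
by rewrite /d; lra.
Qed.

Lemma sigma_seg r : 0 < r -> p2 R (segf r + 1) <= r <= p2 R (segf r) /\ sigma r = interp (segf r) r.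
Proof.
move=> r0; have /andP[h1 h2] := hseg r0; split; first by rewrite ltW ?h2.
by rewrite /sigma leNgt r0.
Qed.

Lemma interp_top n : interp n (p2 R n) = s n.
Proof.
apply/funext => i; rewrite /interp p2S2 mulfK; last by apply: lt0r_neq0; exact: p2_gt0.
have -> : (2 : R) - 1 = 1 by lra.
by rewrite mul1r addrC subrK.
Qed.

Lemma interp_bot n : interp n (p2 R (n + 1)) = s (n + 1).
Proof.
apply/funext => i; rewrite /interp divff; last by apply: lt0r_neq0; exact: p2_gt0.
by rewrite subrr mul0r addr0.
Qed.

Lemma inseg n a : p2 R (n + 1) <= a <= p2 R n -> sigma a = interp n a.
Proof.
move=> /andP[h1 h2]; have a0 : 0 < a by exact: lt_le_trans (p2_gt0 _ _) h1.
have [[/andP[g1 g2] ->]] := sigma_seg a0; set m := segf a.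
have [mn|nm|->//] := ltgtP m n.
  have h : p2 R n <= p2 R (m + 1) by apply: p2_le; lia.
  have := hseg a0; rewrite -/m => /andP[g3 _].
  by have := lt_le_trans g3 h2; rewrite ltNge h.
have h : p2 R m <= p2 R (n + 1) by apply: p2_le; lia.
have ea : a = p2 R (n + 1) by apply/eqP; rewrite eq_le h1 (le_trans g2 h).
have em : m = n + 1.
  apply/eqP; rewrite eq_le; apply/andP; split; last by lia.
  rewrite leNgt; apply/negP => hm.
  have h3 : p2 R m < p2 R (n + 1) by apply: p2_lt.
  by have := le_lt_trans g2 h3; rewrite ea ltxx.
by rewrite em ea interp_top interp_bot.
Qed.

Lemma sigma_p2 n : sigma (p2 R n) = s n.
Proof.
rewrite (@inseg n); first exact: interp_top.
by rewrite lexx andbT ltW // p2_lt_succ.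
Qed.

Lemma sigma_nonneg r : nonneg (sigma r).
Proof.
move=> i; rewrite /sigma; case: ifPn => // ; rewrite -ltNge => r0.
have [hs _] := sigma_seg r0; have /andP[h _] := interp_bounds i hs.
exact: le_trans ((hs1 _).1 i) h.
Qed.

Lemma sigma_mono r1 r2 : 0 <= r1 -> r1 <= r2 -> fle (sigma r1) (sigma r2).
Proof.
move=> r10 r12 i; have [r1le0|r1gt0] := lerP r1 0.
  by rewrite /sigma r1le0; exact: sigma_nonneg.
have r2gt0 : 0 < r2 by exact: lt_le_trans r1gt0 r12.
have [hs1' e1] := sigma_seg r1gt0; have [hs2' e2] := sigma_seg r2gt0.
rewrite e1 e2; set n1 := segf r1; set n2 := segf r2.
have h1 := hseg r1gt0; have h2 := hseg r2gt0; rewrite -/n1 in h1; rewrite -/n2 in h2.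
have [n12|n21|e] := ltgtP n2 n1.
- have /andP[_ u] := interp_bounds i hs1'; apply: le_trans u _.
  have /andP[l _] := interp_bounds i hs2'; apply: le_trans _ l.
  by apply: s_mono; lia.
- have h : p2 R n2 <= p2 R (n1 + 1) by apply: p2_le; lia.
  move: h1 h2 => /andP[g1 _] /andP[_ g2].
  by have := lt_le_trans g1 (le_trans r12 g2); rewrite ltNge h.
- rewrite /interp e lerD2l; apply: ler_wpM2r; first by rewrite subr_ge0; exact: hs3.
  rewrite lerD2r ler_pM2r //; rewrite invr_gt0; exact: p2_gt0.
Qed.

Lemma sigma_le_s r n : 0 <= r -> r <= p2 R n -> fle (sigma r) (s n).
Proof. by move=> r0 rn; rewrite -sigma_p2; exact: sigma_mono. Qed.

Lemma sigma_ge_s r n : p2 R n <= r -> fle (s n) (sigma r).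
Proof. by move=> rn; rewrite -sigma_p2; apply: sigma_mono => //; exact: ltW (p2_gt0 _ _). Qed.

Lemma sigma_bdd r : bounded_fam (sigma r).
Proof.
have [r0|r0] := lerP r 0.
  by exists 0 => i; rewrite /sigma r0 normr0.
have [hs _] := sigma_seg r0; have [M hM] := (hs1 (segf r)).2.
exists M => i; apply: le_trans (hM i); rewrite ger0_norm; last exact: sigma_nonneg.
rewrite ger0_norm; last exact: (hs1 _).1.
apply: sigma_le_s; [exact: ltW|by case/andP: hs].
Qed.

Lemma sigma_Psi r : 0 <= r -> Psi Gam (sigma r).
Proof.
move=> r0; split; first by split; [exact: sigma_nonneg|exact: sigma_bdd].
have [rle0|rgt0] := lerP r 0.
  by rewrite /sigma rle0 Gain0 => i.
have [hs e] := sigma_seg rgt0; move: hs => /andP[h1 h2].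
move=> i; apply: le_trans (_ : Gam (s (segf r)) i <= _).
  apply: Gain_mono; first exact: sigma_nonneg.
  exact: sigma_le_s.
by rewrite -hs2; apply: (sigma_ge_s h1).
Qed.

Lemma sigma_interpolates : interpolates s sigma.
Proof.
split; first by rewrite /sigma lexx.
move=> n th /andP[th0 th1].
have q0 := p2_gt0 R (n + 1).
have ea : (1 - th) * (2:R) ^ (- (n + 1)) + th * 2 ^ (- n) = p2 R (n + 1) * (1 + th).
  rewrite -/(p2 R (n + 1)) -/(p2 R n) (p2S2 n); ring.
rewrite ea (@inseg n); last first.
  rewrite (p2S2 n); apply/andP; split; first by rewrite ler_pMr // lerDl.
  by rewrite mulrC ler_pM2r //; lra.
apply/funext => i; rewrite /interp [p2 R (n + 1) * _]mulrC mulfK; last exact: lt0r_neq0.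
have -> : 1 + th - 1 = th by ring.
ring.
Qed.

Lemma bdd_sub (u v : I -> R) : bounded_fam u -> bounded_fam v -> bounded_fam (fun i => u i - v i).
Proof.
move=> [Mu hu] [Mv hv]; exists (Mu + Mv) => i.
by apply: le_trans (ler_normB _ _) _; exact: lerD.
Qed.

Lemma norm_lip (u v : I -> R) : bounded_fam u -> bounded_fam v ->
  `|linf_norm u - linf_norm v| <= linf_norm (fun i => u i - v i).
Proof.
move=> ub vb; have b := bdd_sub ub vb.
have hD : forall i, `|u i - v i| <= linf_norm (fun i => u i - v i) by move=> i; exact: (norm_ge i b).
set D := linf_norm _ in hD *.
have D0 : 0 <= D by exact: norm_ge0.
have h1 : linf_norm u <= linf_norm v + D.
  apply: norm_le; first by rewrite addr_ge0 // norm_ge0.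
  move=> i; apply: le_trans (_ : `|v i| + `|u i - v i| <= _).
    by rewrite {1}(_ : u i = v i + (u i - v i)); [exact: ler_normD|ring].
  by apply: lerD; [exact: norm_ge|exact: hD].
have h2 : linf_norm v <= linf_norm u + D.
  apply: norm_le; first by rewrite addr_ge0 // norm_ge0.
  move=> i; apply: le_trans (_ : `|u i| + `|u i - v i| <= _).
    by rewrite {1}(_ : v i = u i - (u i - v i)); [exact: ler_normB|ring].
  by apply: lerD; [exact: norm_ge|exact: hD].
by rewrite ler_norml; apply/andP; split; lra.
Qed.

Lemma sigma_diff n a b i : p2 R (n + 1) <= a <= p2 R n -> p2 R (n + 1) <= b <= p2 R n ->
  `|sigma b i - sigma a i| <= `|b - a| * (linf_norm (s n) / p2 R (n + 1)).
Proof.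
move=> ha hb; rewrite (inseg ha) (inseg hb) /interp.
set q := p2 R (n + 1); set d := s n i - s (n + 1) i.
have q0 : 0 < q by exact: p2_gt0.
have -> : s (n + 1) i + (b / q - 1) * d - (s (n + 1) i + (a / q - 1) * d) = (b - a) * (q^-1 * d).
  by ring.
rewrite normrM; apply: ler_wpM2l; first exact: normr_ge0.
rewrite normrM gtr0_norm ?invr_gt0 // mulrC; apply: ler_wpM2r; first by rewrite invr_ge0 ltW.
have := (hs1 (n + 1)).1 i; have := norm_ge i (hs1 n).2; have := ler_norm (s n i).
have := hs3 n i; rewrite /d => *.
by rewrite ger0_norm; lra.
Qed.

Lemma sigma0 : sigma 0 = (fun _ => 0).
Proof. by rewrite /sigma lexx. Qed.

Lemma sigma_cont r : 0 <= r -> forall e, 0 < e -> exists d, 0 < d /\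
  forall r', 0 <= r' -> `|r' - r| < d -> linf_norm (fun i => sigma r' i - sigma r i) < e.
Proof.
move=> r0 e e0; have [rle0|rgt0] := lerP r 0.
  have er : r = 0 by apply/eqP; rewrite eq_le rle0 r0.
  have [N hNe] := s_to0 e0; exists (p2 R N); split; first exact: p2_gt0.
  move=> r' r'0; rewrite er subr0 ger0_norm // => r'N.
  have -> : (fun i => sigma r' i - sigma 0 i) = sigma r' by apply/funext => i; rewrite sigma0 subr0.
  apply: le_lt_trans (hNe N%:Z (lexx _)).
  apply: norm_mono; [exact: sigma_nonneg|apply: sigma_le_s => //; exact: ltW|exact: (hs1 _).2].
have [/andP[hr1' hr2] _] := sigma_seg rgt0; have /andP[hr1 _] := hseg rgt0.
set n := segf r in hr1 hr1' hr2.
set q := p2 R (n + 1) in hr1 hr1' *; set P := p2 R n in hr2 *.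
have q0 : 0 < q by exact: p2_gt0.
have P0 : 0 < P by exact: p2_gt0.
have Pq : P = 2 * q by rewrite /P /q p2S2.
have PP : p2 R (n - 1) = 2 * P by rewrite (p2S2 (n - 1)) subrK.
set K0 := linf_norm (s n) / q; set K1 := linf_norm (s (n - 1)) / P.
have K00 : 0 <= K0 by rewrite divr_ge0 ?norm_ge0 // ltW.
have K10 : 0 <= K1 by rewrite divr_ge0 ?norm_ge0 // ltW.
set L := K0 + K1 + 1.
have L0 : 0 < L by rewrite /L; lra.
exists (Num.min (r - q) (Num.min P (e / (2 * L)))); split.
  by rewrite !lt_min subr_gt0 hr1 P0 divr_gt0 // mulr_gt0.
move=> r' r'0; rewrite !lt_min => /andP[d1 /andP[d2 d3]].
have := ler_norm (r' - r); have := ler_norm (r - r'); rewrite distrC => hn1 hn2.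
have hr'q : q <= r' by lra.
have key : forall i, `|sigma r' i - sigma r i| <= L * `|r' - r|.
  move=> i; have [r'P|r'P] := lerP r' P.
    apply: le_trans (@sigma_diff n r r' i _ _) _; first by rewrite hr1' hr2.
      by rewrite hr'q r'P.
    have KL : K0 <= L by rewrite /L; lra.
    by rewrite [L * _]mulrC; apply: ler_wpM2l; [exact: normr_ge0|exact: KL].
  apply: le_trans (ler_distD (sigma P i) _ _) _.
  have h1 := @sigma_diff (n - 1) P r' i.
  rewrite subrK PP -/P -/K1 in h1.
  have h2 := @sigma_diff n r P i; rewrite -/q -/P -/K0 in h2.
  have e1 : `|r' - P| <= `|r' - r| by rewrite !ger0_norm; lra.
  have e2 : `|P - r| <= `|r' - r| by rewrite !ger0_norm; lra.
  have := h1 _ _; have := h2 _ _.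
  have c1 : q <= r <= P by rewrite hr1' hr2.
  have c2 : q <= P <= P by rewrite lexx andbT Pq; lra.
  have c3 : P <= P <= 2 * P by rewrite lexx /=; lra.
  have c4 : P <= r' <= 2 * P by apply/andP; split; lra.
  move=> /(_ c1 c2) g2 /(_ c3 c4) g1.
  have := mulr_ge0 K00 (normr_ge0 (P - r)); have := mulr_ge0 K10 (normr_ge0 (r' - P)).
  have := ler_wpM2r K00 e2; have := ler_wpM2r K10 e1.
  rewrite distrC in g2; rewrite /L; nra.
apply: le_lt_trans (_ : L * `|r' - r| < e).
  by apply: norm_le; [apply: mulr_ge0; [exact: ltW|exact: normr_ge0]|exact: key].
have : L * `|r' - r| < L * (e / (2 * L)) by rewrite ltr_pM2l.
have -> : L * (e / (2 * L)) = e / 2 by field; exact: lt0r_neq0.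
lra.
Qed.
Lemma norm_zero : linf_norm (fun _ : I => (0:R)) = 0.
Proof. by apply/eqP; rewrite eq_le norm_ge0 andbT; apply: norm_le => // i; rewrite normr0. Qed.

Definition phimax r := r + linf_norm (sigma r).

Lemma phimax_K : Kinf phimax.
Proof.
split; first by rewrite /phimax sigma0 norm_zero addr0.
split.
  move=> x x0 e e0; have e20 : 0 < e / 2 by lra.
  have [d1 [d10 hd1]] := sigma_cont x0 e20.
  exists (Num.min d1 (e / 2)); split; first by rewrite lt_min d10 /=; lra.
  move=> y y0; rewrite lt_min => /andP[yd1 ye].
  have h := hd1 y y0 yd1.
  have := norm_lip (sigma_bdd y) (sigma_bdd x).
  rewrite /phimax; set a := linf_norm (sigma y); set b := linf_norm (sigma x) => hab.
  have -> : y + a - (x + b) = (y - x) + (a - b) by ring.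
  apply: le_lt_trans (ler_normD _ _) _.
  lra.
split.
  move=> x y x0 xy; rewrite /phimax.
  have := norm_mono (sigma_nonneg x) (sigma_mono x0 (ltW xy)) (sigma_bdd y); lra.
move=> M; exists (`|M| + 1); split; first by have := normr_ge0 M; lra.
rewrite /phimax; have := ler_norm M; have := norm_ge0 (sigma (`|M| + 1)); lra.
Qed.

Lemma phimax_bound r i : 0 <= r -> sigma r i <= phimax r.
Proof.
move=> r0; rewrite /phimax; apply: le_trans (ler_norm _) _.
apply: le_trans (norm_ge i (sigma_bdd r)) _; lra.
Qed.

Definition gmin r := phi (sigma (r / 2) i0).
Definition phimin r := gmin r * hfun r.

Lemma gmin_ge0 r : 0 <= gmin r.
Proof. exact: Kinf_ge0 phiK (sigma_nonneg _ _). Qed.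

Lemma gmin_mono x y : 0 <= x -> x <= y -> gmin x <= gmin y.
Proof.
move=> x0 xy; apply: Kinf_le phiK (sigma_nonneg _ _) _.
by apply: sigma_mono; lra.
Qed.

Lemma gmin_pos y : 0 < y -> 0 < gmin y.
Proof.
move=> y0; apply: Kinf_gt0 phiK _.
have y20 : 0 < y / 2 by lra.
have [/andP[h1 _] _] := sigma_seg y20.
exact: lt_le_trans (s_pos _ i0) (sigma_ge_s h1 i0).
Qed.

Lemma phimin_bound r i : 0 <= r -> phimin r <= sigma r i.
Proof.
move=> r0; have [rle0|rgt0] := lerP r 0.
  have -> : r = 0 by apply/eqP; rewrite eq_le rle0 r0.
  by rewrite /phimin hfun0 mulr0; exact: sigma_nonneg.
apply: le_trans (_ : gmin r <= _).
  by rewrite /phimin ler_piMr ?gmin_ge0 ?hfun_le1.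
have [/andP[h1 h2] _] := sigma_seg rgt0; set m := segf r in h1 h2.
apply: le_trans (_ : phi (s (m + 1) i0) <= _).
  apply: Kinf_le phiK (sigma_nonneg _ _) _; apply: sigma_le_s; first lra.
  by move: h2; rewrite p2S2; lra.
exact: le_trans (hs4 _ i i0) (sigma_ge_s h1 i).
Qed.

Lemma phimin_K : Kinf phimin.
Proof.
split; first by rewrite /phimin hfun0 mulr0.
split.
  move=> x x0 e e0; set gx := gmin x.
  have e20 : 0 < e / 2 by lra.
  have gx0 : 0 <= gx by exact: gmin_ge0.
  have x20 : 0 <= x / 2 by lra.
  have [_ [phic _]] := phiK.
  have [d1 [d10 hd1]] := phic _ (sigma_nonneg (x / 2) i0) (e / 2) e20.
  have [d2 [d20 hd2]] := sigma_cont x20 d10.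
  set t := e / (2 * (gx + 1)).
  have t0 : 0 < t by rewrite divr_gt0 //; lra.
  have ht : t * (2 * (gx + 1)) = e by rewrite /t mulrC mulrCA divff ?mulr1 //; apply: lt0r_neq0; lra.
  exists (Num.min (2 * d2) t); split; first by rewrite lt_min t0 andbT; lra.
  move=> y y0; rewrite lt_min => /andP[yd2 yt].
  have yx2 : `|y / 2 - x / 2| < d2.
    by move: yd2; rewrite !ltr_norml => /andP[a b]; apply/andP; split; lra.
  have hg : `|gmin y - gx| < e / 2.
    apply: hd1; first exact: sigma_nonneg.
    apply: le_lt_trans (hd2 _ _ yx2); last lra.
    exact: (norm_ge i0 (bdd_sub (sigma_bdd _) (sigma_bdd _))).
  have hy0 := hfun_ge0 y0; have hy1 := hfun_le1 y0.
  have hl := hfun_lip x0 y0.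
  rewrite /phimin -/gx.
  have -> : gmin y * hfun y - gx * hfun x = (gmin y - gx) * hfun y + gx * (hfun y - hfun x) by ring.
  apply: le_lt_trans (ler_normD _ _) _.
  rewrite (normrM (gmin y - gx) (hfun y)) (normrM gx) (ger0_norm hy0) (ger0_norm gx0).
  have h1 : `|gmin y - gx| * hfun y <= `|gmin y - gx| by rewrite ler_piMr ?normr_ge0.
  have h2 : gx * `|hfun y - hfun x| <= gx * `|y - x| by exact: ler_wpM2l.
  have h3 : gx * `|y - x| <= gx * t by apply: ler_wpM2l => //; exact: ltW.
  have h4 : gx * t <= e / 2 by nra.
  lra.
split.
  move=> x y x0 xy; rewrite /phimin.
  apply: le_lt_trans (_ : gmin x * hfun x <= gmin y * hfun x) _.
    by apply: ler_wpM2r; [exact: hfun_ge0|exact: gmin_mono (ltW xy)].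
  by rewrite ltr_pM2l ?gmin_pos ?hfun_lt //; exact: le_lt_trans x0 xy.
move=> M; have [u [u0 hu]] := Kinf_unb (2 * M) phiK.
have [p hp] := s_unb u.
have pp := p2_gt0 R (- p%:Z).
exists (2 * p2 R (- p%:Z) + 1); split; first lra.
set y := _ + 1.
have gy : phi u <= gmin y.
  apply: Kinf_le phiK u0 _; apply: le_trans (ltW hp) _.
  by apply: sigma_ge_s; rewrite /y; lra.
have hh := hfun_half (_ : 1 <= y); rewrite /y in hh.
have hy : 1 / 2 <= hfun y by apply: hh; lra.
rewrite /phimin; have := gmin_ge0 y; nra.
Qed.

Lemma sigma_C0 : C0_path_of_decay Gam sigma.
Proof.
split; first exact: sigma_Psi.
split.
  exists phimin, phimax; split; first exact: phimin_K.
  split; first exact: phimax_K.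
  move=> r r0; split => i; rewrite /ones mulr1; [exact: phimin_bound|exact: phimax_bound].
split; first by move=> r1 r2 r10 r12; exact: sigma_mono.
exact: sigma_cont.
Qed.

End Sigma.
End Path.

Lemma final_main : exists s0 : I -> R,
    int_linf_plus s0 /\ Psi Gam s0 /\
    exists sn : int -> I -> R,
      sn 0 = s0 /\ (forall n : int, sn (n + 1) = Gam (sn n)) /\
      exists sigma : R -> I -> R,
        interpolates sn sigma /\ C0_path_of_decay Gam sigma.
Proof.
have [f hf] := choice start.
have [G [GU hG]] := @ultraFilterLemma nat \oo _.
have [s [hs1 [hs2 [hs3 [hs4 hs5]]]]] := @orbit_exists f hf G GU hG.
have H : forall r : R, exists n : int, 0 < r -> p2 R (n + 1) < r <= p2 R n.
  move=> r; have [r0|r0] := lerP r 0.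
    by exists 0.
  by have [n hn] := seg_exists r0; exists n.
have [segf hsegf] := choice H.
exists (s 0); split.
  split; first exact: hs1.
  exists (xi (eta (phi 1))); split; [exact: delta_gt0|exact: hs5].
split.
  split; first exact: hs1.
  by have := hs3 0; rewrite hs2.
exists s; split => //; split; first exact: hs2.
exists (sigma s segf); split; first exact: sigma_interpolates.
exact: sigma_C0.
Qed.

End GainLemmas.

Theorem theorem3p21 (R : realType) (I : countType) (hI : [set: I] !=set0)
  (Ii : I -> set I) (gam : I -> I -> R -> R) (mu : I -> (I -> R) -> \bar R)
  (hGam : gain_operator_data Ii gam mu)
  (A : set (I -> R))
  (hA : A `<=` Psi (Gain Ii gam mu) /\ weakstar_closed A /\
        (forall s, A s -> A (Gain Ii gam mu s)) /\ cofinal A /\ coercive A)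
  (hGATT : GATT (Gain Ii gam mu))
  (hAssA : assumptionA Ii gam)
  (hN : forall i, Nplus1 Ii i `\` [set i] !=set0) :
  exists s0 : I -> R,
    int_linf_plus s0 /\ Psi (Gain Ii gam mu) s0 /\
    exists sn : int -> I -> R,
      sn 0 = s0 /\ (forall n : int, sn (n + 1) = Gain Ii gam mu (sn n)) /\
      exists sigma : R -> I -> R,
        interpolates sn sigma /\ C0_path_of_decay (Gain Ii gam mu) sigma.
Proof.
move: hGam => [hg1 [hgK [_ [_ [[xi [xiK hM1]] [hM2 [hM3 _]]]]]]].
move: hA => [hAPsi [_ [hAinv [hcof [phi [phiK hcoer]]]]]].
move: hAssA => [[eta [etaK heta]] hne].
have [i0 _] := hI.
have hN' : forall j, exists i, Ii i j.
  move=> j; have [k [hk nk]] := hN j; case: hk => [kj|kj]; last by exists k.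
  by exfalso; apply: nk; rewrite kj.
have hfin : forall i, finite_set (Ii i) by move=> i; exact: (hg1 i).1.
exact: (@final_main R I Ii gam mu xi eta hfin hgK xiK etaK hM1 hM2 hM3 heta hne hN'
  A hAPsi hAinv hcof phi phiK hcoer hGATT i0).
Qed.
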